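(* Under the standing setup with $\gamma>0$ and $s_1=\dots=s_n=0$ (so Georgia's strategy set is $\{0\}$ and Hank's is $[0,1]$), define $\tilde q(0,0)=\beta-\beta\lambda-\chi\gamma$, $\tilde q(0,1)=(\gamma-\chi)\gamma+(\beta-2\gamma)(1-\lambda)$ and $\tilde r(0)=\frac{1-\lambda-\sqrt{(1-\lambda)(1-\lambda-\beta)+\chi\gamma}}{\gamma}$. Then the Nash equilibrium of the zero-sum game (Georgia minimizing $f$, Hank maximizing $f$) is $(0,1)$ if $\tilde q(0,1)\ge0$; $(0,0)$ if $\tilde q(0,0)\le0$; and $(0,\tilde r(0))$ otherwise.
   Context: Standing setup. Fix $n\in\mathbb N$ and $W=[w_{ij}]\in\mathbb R^{n\times n}$ with $w_{ij}\ge0$, $w_{ii}=0$. Let $\|W\|_\infty=\max_i\sum_j|w_{ij}|$, $\|W\|_1=\max_j\sum_i|w_{ij}|$, let $\lambda$ be the spectral radius of $W$, and assume there is $c\in\mathbb R^n$ with all entries positive and $W^\top c=\lambda c$. Fix $\beta\ge\gamma\ge0$ with $1-\max\{\|W\|_\infty,\|W\|_1\}>\max\{2\beta,4\gamma\}$. Fix innate opinions $s\in[0,1]^n$, $\overline s=\max_is_i$, $\underline s=\min_is_i$; Georgia chooses $g\in[0,\underline s]$, Hank chooses $h\in[\overline s,1]$. Set $\widehat c_i=c_i/\sum_jc_j$, $\widehat s=\sum_i\widehat c_is_i$, $\chi=\sum_i\widehat c_is_i\sum_jw_{ij}$. Define $$f(g,h)=\frac{(1-2\beta+(h-g)\gamma)\widehat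 s-\chi+(h+g)\beta+(g^2-h^2)\gamma}{1-\lambda+(g-h)\gamma}\,c^\top\mathbf 1$$ (the centrality-weighted steady state of the opinion dynamics with source opinions $g,h$). *)

(* Defs.v *)
(* Scalars live in an arbitrary numClosedFieldType C
   (e.g. the complex numbers); all data of the model are real elements of C. *)
From HB Require Import structures.
From mathcomp Require Import all_boot all_order all_algebra.
Set Implicit Arguments. Unset Strict Implicit. Unset Printing Implicit Defensive.
Import Order.TTheory GRing.Theory Num.Theory.
Local Open Scope ring_scope.

Section Defs.
Variables (C : numClosedFieldType) (n : nat).

(* ||W||_inf = max_i sum_j |w_ij|  (entries nonnegative so 0 is a safe base) *)
Definition norm_inf (W : 'M[C]_n) : C :=
  \big[Num.max/0]_(i < n) \sum_(j < n) `|W i j|.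
Definition norm_one (W : 'M[C]_n) : C :=
  \big[Num.max/0]_(j < n) \sum_(i < n) `|W i j|.

Definition is_spectral_radius (A : 'M[C]_n) (r : C) : Prop :=
  (exists2 mu, eigenvalue A mu & `|mu| = r) /\
  (forall mu, eigenvalue A mu -> `|mu| <= r).

Definition chat (c : 'cV[C]_n) (i : 'I_n) : C := c i 0 / \sum_(j < n) c j 0.
Definition shat (c s : 'cV[C]_n) : C := \sum_(i < n) chat c i * s i 0.
Definition chi (W : 'M[C]_n) (c s : 'cV[C]_n) : C :=
  \sum_(i < n) chat c i * s i 0 * \sum_(j < n) W i j.

Definition fval (W : 'M[C]_n) (lam beta gamma : C) (c s : 'cV[C]_n)
    (g h : C) : C :=
  ((1 - 2 * beta + (h - g) * gamma) * shat c s - chi W c s + (h + g) * beta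
     + (g ^+ 2 - h ^+ 2) * gamma)
  / (1 - lam + (g - h) * gamma) * \sum_(i < n) c i 0.

Definition georgia_strat (s : 'cV[C]_n) (g : C) : Prop :=
  0 <= g /\ forall i, g <= s i 0.
Definition hank_strat (s : 'cV[C]_n) (h : C) : Prop :=
  (forall i, s i 0 <= h) /\ h <= 1.
End Defs.

Definition is_nash_zero_sum (C : numClosedFieldType) (G H : C -> Prop)
    (F : C -> C -> C) (g h : C) : Prop :=
  [/\ G g, H h,
      (forall g', G g' -> F g h <= F g' h) &
      (forall h', H h' -> F g h' <= F g h)].

(* Main.v *)
Require Import Defs.
From HB Require Import structures.
From mathcomp Require Import all_boot all_order all_algebra.
From mathcomp Require Import ring lra.
Import Order.TTheory GRing.Theory Num.Theory.
Local Open Scope ring_scope.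


Lemma gt0_ge0_add (C : numClosedFieldType) (x y : C) : 0 < x -> 0 <= y -> 0 < x + y.
Proof. by move=> hx hy; apply: (lt_le_trans hx); rewrite lerDl. Qed.

Definition Pf {C : numClosedFieldType} (a b g h : C) := (b * h - g * h ^+ 2) / (a - g * h).

Lemma Pf_diff (C : numClosedFieldType) (a b g x y : C) : a - g * x != 0 -> a - g * y != 0 ->
  Pf a b g x - Pf a b g y =
  (x - y) * ((a - g * x) * (a - g * y) - a * (a - b)) / ((a - g * x) * (a - g * y)).
Proof. move=> hx hy; rewrite /Pf; field; by rewrite hx hy. Qed.

Lemma core (C : numClosedFieldType) (a b g : C) : 0 < g -> g <= b -> 2 * b < a -> 4 * g < a ->
  let hs := if 0 <= g * g + (b - 2 * g) * a then 1
            else (a - sqrtC (a * (a - b))) / g in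
  [/\ 0 <= hs, hs <= 1 &
   forall h, 0 <= h -> h <= 1 ->
     Pf a b g h <= Pf a b g hs /\ (Pf a b g hs <= Pf a b g h -> h = hs)].
Proof.
move=> g0 gb ab ag; rewrite /=.
have b0 : 0 < b by exact: lt_le_trans gb.
have a2b : 0 < a - 2 * b by rewrite subr_gt0.
have a4g : 0 < a - 4 * g by rewrite subr_gt0.
have amb : 0 < a - b.
  have -> : a - b = (a - 2 * b) + b by ring.
  by rewrite addr_gt0.
have a0 : 0 < a.
  have -> : a = (a - b) + b by ring.
  by rewrite addr_gt0.
have ur : forall h, 0 <= h -> h <= 1 -> 0 < a - g * h.
  move=> h h0 h1; have -> : a - g * h = (a - 4 * g) + g * (3 + (1 - h)) by ring.
  apply: gt0_ge0_add => //; apply: mulr_ge0; first exact: ltW.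
  by apply: addr_ge0 => //; rewrite subr_ge0.
have gnz : g != 0 by rewrite gt_eqF.
have rg : g \is Num.real by exact: gtr0_real.
have rb : b \is Num.real by exact: gtr0_real.
have ra : a \is Num.real by exact: gtr0_real.
have fin : forall h t, (Pf a b g t - Pf a b g h = 0 -> h = t) ->
   0 <= Pf a b g t - Pf a b g h ->
   Pf a b g h <= Pf a b g t /\ (Pf a b g t <= Pf a b g h -> h = t).
  move=> h t E D; split; first by rewrite -subr_ge0.
  move=> le; apply: E; apply/le_anti; rewrite D andbT.
  by rewrite subr_le0.
case: ifP => hq.
  split; [exact: ler01 | exact: lexx |].
  move=> h h0 h1; apply: fin.
    have u1 := ur 1 ler01 (lexx _); have uh := ur h h0 h1.
    rewrite Pf_diff ?gt_eqF //.
    have -> : (a - g * 1) * (a - g * h) - a * (a - b) =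
       (a - g * 1) * (g * (1 - h)) + (g * g + (b - 2 * g) * a) by ring.
    have zn : (a - g * 1) * (a - g * h) != 0 by rewrite mulf_neq0 // gt_eqF.
    move/eqP; rewrite mulf_eq0 invr_eq0 (negbTE zn) orbF mulf_eq0.
    case/orP; first by rewrite subr_eq0 => /eqP.
    rewrite paddr_eq0 //; last first.
      by apply: mulr_ge0; [exact: ltW | apply: mulr_ge0; [exact: ltW|rewrite subr_ge0]].
    case/andP; rewrite !mulf_eq0 gt_eqF // gt_eqF //= subr_eq0 => /eqP -> _ //.
  have u1 := ur 1 ler01 (lexx _); have uh := ur h h0 h1.
  rewrite Pf_diff ?gt_eqF //; apply: divr_ge0; last by apply: mulr_ge0; exact: ltW.
  apply: mulr_ge0; first by rewrite subr_ge0.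
  have -> : (a - g * 1) * (a - g * h) - a * (a - b) =
       (a - g * 1) * (g * (1 - h)) + (g * g + (b - 2 * g) * a) by ring.
  apply: addr_ge0 => //.
  by apply: mulr_ge0; [exact: ltW | apply: mulr_ge0; [exact: ltW|rewrite subr_ge0]].
set q := g * g + (b - 2 * g) * a in hq.
have qr : q \is Num.real by rewrite /q; apply: rpredD; apply: rpredM => //;
  apply: rpredB => //; apply: rpredM => //; apply: rpred_nat.
have qn : q < 0 by rewrite real_ltNge ?real0 // hq.
have K0 : 0 < a * (a - b) by rewrite mulr_gt0.
have sK0 : 0 < sqrtC (a * (a - b)) by rewrite sqrtC_gt0.
have hK := sqrtCK (a * (a - b)).
set K := a * (a - b) in K0 sK0 hK *.
set sK := sqrtC K in sK0 hK *.
have sKr : sK \is Num.real by exact: gtr0_real.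
have e1 : a - sK = a * b / (a + sK).
  have nz : a + sK != 0 by rewrite gt_eqF // addr_gt0.
  apply: (mulIf nz); rewrite mulfVK //.
  have -> : (a - sK) * (a + sK) = a ^+ 2 - sK ^+ 2 by ring.
  by rewrite hK /K; ring.
have amg : 0 < a - g * 1 by apply: ur; [exact: ler01 | exact: lexx].
have e2 : sK - (a - g) = - q / (sK + (a - g)).
  have nz : sK + (a - g) != 0 by rewrite gt_eqF // addr_gt0 // -(mulr1 g).
  apply: (mulIf nz); rewrite mulfVK //.
  have -> : (sK - (a - g)) * (sK + (a - g)) = sK ^+ 2 - (a - g) ^+ 2 by ring.
  by rewrite hK /K /q; ring.
have t0 : 0 <= (a - sK) / g.
  rewrite e1; apply: divr_ge0; last exact: ltW.
  apply: divr_ge0; first by apply: mulr_ge0; exact: ltW.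
  by apply: ltW; rewrite addr_gt0.
have t1 : (a - sK) / g <= 1.
  rewrite -subr_ge0.
  have -> : 1 - (a - sK) / g = (sK - (a - g)) / g by field.
  rewrite e2; apply: divr_ge0; last exact: ltW.
  apply: divr_ge0; first by rewrite oppr_ge0 ltW.
  by apply: ltW; rewrite addr_gt0 // -(mulr1 g).
split => // h h0 h1.
set t := (a - sK) / g in t0 t1 *.
have ut : a - g * t = sK by rewrite /t; field.
have uh := ur h h0 h1.
have E : Pf a b g t - Pf a b g h = (a - g * h - sK) ^+ 2 / (g * (a - g * h)).
  rewrite Pf_diff ?gt_eqF // ?ut //.
  have -> : t - h = ((a - g * h) - (a - g * t)) / g by field.
  have hK' : sK ^+ 2 = a * (a - b) := hK.
  rewrite ut -hK'; field; rewrite !gt_eqF //.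
have ur2 : a - g * h - sK \is Num.real by apply: rpredB => //; exact: gtr0_real.
apply: fin.
  have zn : g * (a - g * h) != 0 by rewrite mulf_neq0 // gt_eqF.
  rewrite E => /eqP; rewrite mulf_eq0 invr_eq0 (negbTE zn) orbF.
  rewrite expf_eq0 /= subr_eq0 -ut => /eqP H.
  by apply: (mulfI gnz); apply: oppr_inj; apply: (addrI a).
rewrite E; apply: divr_ge0; last by apply: mulr_ge0; exact: ltW.
by rewrite -real_normK // exprn_ge0.
Qed.

Lemma le_bigmax (C : numClosedFieldType) (I : eqType) (s : seq I) (F : I -> C) i :
  (forall j, 0 <= F j) -> i \in s -> F i <= \big[Num.max/0]_(j <- s) F j.
Proof.
move=> Fge; elim: s => // x s IH; rewrite big_cons inE => /orP[/eqP->|/IH H].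
  rewrite comparable_le_max ?lexx //; apply: real_comparable; first exact: ger0_real.
  by apply: bigmax_real; [exact: real0 | move=> j _; exact: ger0_real].
rewrite comparable_le_max ?H ?orbT //; apply: real_comparable; first exact: ger0_real.
by apply: bigmax_real; [exact: real0 | move=> j _; exact: ger0_real].
Qed.

Lemma bigmax_ge0 (C : numClosedFieldType) (I : eqType) (s : seq I) (F : I -> C) :
  (forall j, 0 <= F j) -> 0 <= \big[Num.max/0]_(j <- s) F j.
Proof.
move=> Fge; elim: s => [|x s IH]; first by rewrite big_nil.
rewrite big_cons comparable_le_max ?IH ?orbT //; apply: real_comparable; first exact: ger0_real.
by apply: bigmax_real; [exact: real0 | move=> j _; exact: ger0_real].
Qed.

Theorem corollary4 (C : numClosedFieldType) (n : nat) (W : 'M[C]_n)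
    (lam : C) (c : 'cV[C]_n) (beta gamma : C) (s : 'cV[C]_n) :
  (0 < n)%N ->
  (forall i j, 0 <= W i j) ->
  (forall i, W i i = 0) ->
  is_spectral_radius W lam ->
  (forall i, 0 < c i 0) ->
  W^T *m c = lam *: c ->
  gamma <= beta -> 0 <= gamma ->
  Num.max (2 * beta) (4 * gamma) < 1 - Num.max (norm_inf W) (norm_one W) ->
  0 < gamma ->
  (forall i, s i 0 = 0) ->
  let F := fval W lam beta gamma c s in
  let q00 := beta - beta * lam - chi W c s * gamma in
  let q01 := (gamma - chi W c s) * gamma + (beta - 2 * gamma) * (1 - lam) in
  let r0 := (1 - lam - sqrtC ((1 - lam) * (1 - lam - beta) + chi W c s * gamma))
            / gamma in
  let h_star := if 0 <= q01 then 1 else if q00 <= 0 then 0 else r0 in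
  forall g h, is_nash_zero_sum (georgia_strat s) (hank_strat s) F g h <->
              (g = 0 /\ h = h_star).
Proof.
move=> n0 Wge Wdiag [[mu _ hmu] _] cpos Wc gb g0' Hmax g0 s0.
move=> F q00 q01 r0 h_star g h.
have chi0 : chi W c s = 0.
  by rewrite /chi big1 // => i _; rewrite s0 mulr0 mul0r.
have shat0 : shat c s = 0.
  by rewrite /shat big1 // => i _; rewrite s0 mulr0.
set S := \sum_(i < n) c i 0.
have S0 : 0 < S.
  rewrite /S (bigD1 (Ordinal n0)) //=; apply: gt0_ge0_add; first exact: cpos.
  by apply: sumr_ge0 => i _; apply: ltW.
have lam0 : 0 <= lam by rewrite -hmu normr_ge0.
set ni := norm_inf W; set no := norm_one W.
have rk : forall k, \sum_(j < n) W k j <= ni.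
  move=> k; rewrite /ni /norm_inf.
  have -> : \sum_(j < n) W k j = \sum_(j < n) `|W k j|.
    by apply: eq_bigr => j _; rewrite ger0_norm.
  apply: le_bigmax; last exact: mem_index_enum.
  by move=> j; apply: sumr_ge0 => i _; exact: normr_ge0.
have lamS : lam * S = \sum_(k < n) c k 0 * \sum_(j < n) W k j.
  rewrite /S mulr_sumr.
  have -> : \sum_(j < n) lam * c j 0 = \sum_(j < n) \sum_(k < n) W k j * c k 0.
    apply: eq_bigr => j _.
    have := congr1 (fun M : 'cV[C]_n => M j 0) Wc; rewrite /= !mxE => <-.
    by apply: eq_bigr => k _; rewrite !mxE.
  rewrite exchange_big /=; apply: eq_bigr => k _; rewrite mulr_sumr.
  by apply: eq_bigr => j _; rewrite mulrC.
have lamni : lam <= ni.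
  rewrite -(ler_pM2r S0) lamS /S mulr_sumr; apply: ler_sum => k _.
  by rewrite mulrC; apply: ler_wpM2r; [exact: ltW | exact: rk].
have ni0 : 0 <= ni.
  by apply: bigmax_ge0 => j; apply: sumr_ge0 => i _; exact: normr_ge0.
have no0 : 0 <= no.
  by apply: bigmax_ge0 => j; apply: sumr_ge0 => i _; exact: normr_ge0.
have b0 : 0 < beta by exact: lt_le_trans gb.
have lammax : lam <= Num.max ni no.
  rewrite comparable_le_max ?lamni //; apply: real_comparable; exact: ger0_real.
have r2b : 2 * beta \is Num.real by apply: gtr0_real; rewrite mulr_gt0 // ltr0n.
have r4g : 4 * gamma \is Num.real by apply: gtr0_real; rewrite mulr_gt0 // ltr0n.
have HM : 1 - Num.max ni no <= 1 - lam by rewrite lerD2l lerN2.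
have ab : 2 * beta < 1 - lam.
  apply: (le_lt_trans (y := Num.max (2 * beta) (4 * gamma))).
    by rewrite comparable_le_max ?lexx // real_comparable.
  exact: lt_le_trans Hmax HM.
have ag : 4 * gamma < 1 - lam.
  apply: (le_lt_trans (y := Num.max (2 * beta) (4 * gamma))).
    by rewrite comparable_le_max ?lexx ?orbT // real_comparable.
  exact: lt_le_trans Hmax HM.
move: (@core _ _ _ _ g0 gb ab ag) => /= [hs0 hs1 Hcore].
have a0 : 0 < 1 - lam.
  by apply: lt_trans ab; rewrite mulr_gt0 // ltr0n.
have Hh : h_star = (if 0 <= gamma * gamma + (beta - 2 * gamma) * (1 - lam) then 1
     else (1 - lam - sqrtC ((1 - lam) * (1 - lam - beta))) / gamma).
  rewrite /h_star /q01 /q00 /r0 chi0 !mul0r !subr0 !addr0.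
  have q0 : 0 < beta - beta * lam.
    have -> : beta - beta * lam = beta * (1 - lam) by ring.
    by rewrite mulr_gt0.
  by rewrite (lt_geF q0).
rewrite Hh.
set hs := (if _ then _ else _) in hs0 hs1 Hcore *.
have Fe : forall x, F 0 x = Pf (1 - lam) beta gamma x * S.
  move=> x; rewrite /F /fval shat0 chi0 /Pf.
  congr (_ / _ * _); ring.
have i0 : 'I_n := Ordinal n0.
have Gs : forall x, georgia_strat s x <-> x = 0.
  move=> x; split.
    by case=> x0 /(_ i0); rewrite s0 => x0'; apply/le_anti; rewrite x0 x0'.
  by move=> ->; split => // i; rewrite s0.
have Hs : forall x, hank_strat s x <-> 0 <= x /\ x <= 1.
  move=> x; split.
    by case=> /(_ i0); rewrite s0.
  by case=> x0 x1; split => // i; rewrite s0.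
split.
  case=> /Gs Gg /Hs [h0 h1] _ HC; split => //.
  have := HC hs (proj2 (Hs hs) (conj hs0 hs1)).
  rewrite Gg !Fe ler_pM2r // => le.
  exact: (proj2 (Hcore h h0 h1) le).
case=> -> ->; split.
- exact: (proj2 (Gs 0) erefl).
- exact: (proj2 (Hs hs) (conj hs0 hs1)).
- by move=> g' /Gs ->.
- move=> h' /Hs [h0 h1]; rewrite !Fe ler_pM2r //.
  exact: (proj1 (Hcore h' h0 h1)).
Qed.
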